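(* For every input $\sigma$ of List Update with Delays and every time $t$, the total cost (access cost plus swaps plus delay cost) incurred by ALG up to time $t$ is at most $6\sum_{k=1}^m d_k(t)$.
   Context: List Update with Delays. A set $\mathbb{E}$ of $n$ elements is kept in an ordered list (position $1$ is the head). An input $\sigma$ is a sequence of requests $r_1,\dots,r_m$; request $r_k$ specifies an element $e_k\in\mathbb{E}$, an arrival time $a_k$ and a delay function $D_k$ which is non-negative, non-decreasing, and $0$ up to time $a_k$. An algorithm may perform an access up to position $i$ at cost $i$, serving every pending request whose element currently lies in positions $1,\dots,i$, and may swap adjacent elements at cost $1$; actions are instantaneous. A request served at time $s$ incurs delay cost $D_k(s)$. Cost = access + swaps + delay. Algorithm ALG maintains a request counter $RC_k$ for each request and an element counter $EC_e$ for each element, with $EC_e=0$ initially. When $r_k$ arrives, $RC_k$ is created with value $0$. While $r_k$ is pending in ALG, $RC_k$ and $EC_{e_k}$ each increase by exactly the delay $r_k$ incurs; after $r_k$ is served, $RC_k$ stops increasing until it is deleted. Events: (i) prefix-request-counters event on $\ell\in[n]$, occurring when the sum of the non-deleted request counters of requests whose elements are currently in positions $1,\dots,\ell$ reaches $\ell$: ALG accesses the first $\min(2\ell,n)$ positions and deletes the request counters of requests for the elements in the first $\ell$ positions; (ii) element-counter event on $e$, occurring when $EC_e$ reaches the current position $\ell$ of $e$: ALG accesses the first $\min(2\ell,n)$ positions, deletes all request counters of requests for $e$, sets $EC_e\leftarrow 0$, and moves $e$ to the front by $\ell-1$ adjacent swaps. For a request $r_k$ let $s_k$ be the time ALG serves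 it ($s_k=\infty$ if never). Define $d_k(t)=D_k(\min(t,s_k))$ (for $s_k=\infty$, $d_k(t)=D_k(t)$), the delay ALG has incurred on $r_k$ up to time $t$. *)

(* Defs.v *)
From HB Require Import structures.
From mathcomp Require Import all_boot all_order all_algebra.
From mathcomp Require Import reals.
Set Implicit Arguments. Unset Strict Implicit. Unset Printing Implicit Defensive.
Import Order.TTheory GRing.Theory Num.Theory.
Local Open Scope ring_scope.

(* List Update with Delays.  Elements are 'I_n, requests are 'I_m.         *)
(* A request k asks for element [el k], arrives at [arr k], and has delay  *)
(* function [D k].                                                          *)

Definition valid_input (R : realType) (m : nat) (arr : 'I_m -> R)
    (D : 'I_m -> R -> R) : Prop :=
  [/\ (forall k t, 0 <= D k t),
      (forall k, {homo D k : x y / x <= y}) &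
      (forall k t, t <= arr k -> D k t = 0)].

Inductive alg_event (n : nat) : Type :=
  | PrefixEv of nat        (* prefix-request-counters event on l (1-based) *)
  | ElemEv of 'I_n.

Record alg_state (R : realType) (n m : nat) : Type := AlgState {
  st_list : seq 'I_n;            (* the list; head = position 1 *)
  st_srv  : 'I_m -> option R;    (* serving time, if already served *)
  st_del  : 'I_m -> bool;
  st_rst  : 'I_n -> option R     (* time of last reset of EC_e, if any *)
}.

Section Alg.
Variables (R : realType) (n m : nat).
Variables (el : 'I_m -> 'I_n) (arr : 'I_m -> R).

(* 0-based position of e in the list *)
Definition pos (S : alg_state R n m) (e : 'I_n) : nat := index e (st_list S).

Definition in_prefix (S : alg_state R n m) (i : nat) (e : 'I_n) : bool :=
  (pos S e < i)%N.

(* number of positions accessed by the event *)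
Definition ev_depth (S : alg_state R n m) (ev : alg_event n) : nat :=
  match ev with
  | PrefixEv l => minn (2 * l)%N n
  | ElemEv e => minn (2 * (pos S e).+1)%N n
  end.

(* access cost + swap cost of the event *)
Definition ev_cost (S : alg_state R n m) (ev : alg_event n) : nat :=
  match ev with
  | PrefixEv l => ev_depth S ev
  | ElemEv e => (ev_depth S ev + pos S e)%N   (* pos S e = l - 1 swaps *)
  end.

Definition step (S : alg_state R n m) (x : R * alg_event n) : alg_state R n m :=
  let tau := x.1 in let ev := x.2 in
  AlgState
    (match ev with ElemEv e => e :: rem e (st_list S) | PrefixEv _ => st_list S end)
    (fun k => match st_srv S k with
              | Some s => Some s
              | None => if (arr k <= tau) && in_prefix S (ev_depth S ev) (el k)
                        then Some tau else None
              end)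
    (fun k => st_del S k ||
              ((arr k <= tau) &&
               match ev with
               | PrefixEv l => in_prefix S l (el k)
               | ElemEv e => el k == e
               end))
    (fun x => match ev with
              | ElemEv e => if x == e then Some tau else st_rst S x
              | PrefixEv _ => st_rst S x
              end).

Definition init_state (L0 : seq 'I_n) : alg_state R n m :=
  AlgState L0 (fun _ => None) (fun _ => false) (fun _ => None).

Definition run_state (L0 : seq 'I_n) (evs : seq (R * alg_event n)) :=
  foldl step (init_state L0) evs.

Variable (D : 'I_m -> R -> R).

(* d_k(t) = D_k(min(t, s_k)) where s_k is the serving time of r_k in the
   run [evs] (s_k = infinity if never served). *)
Definition dly (L0 : seq 'I_n) (evs : seq (R * alg_event n)) (k : 'I_m) (t : R) : R :=
  D k (match st_srv (run_state L0 evs) k with Some s => Num.min t s | None => t end).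

Section Counters.
Variables (L0 : seq 'I_n) (evs : seq (R * alg_event n)).

(* sum of non-deleted request counters of requests whose element is in
   positions 1..l, at time t, in state S.  The value of a live counter
   RC_k is the delay r_k has incurred so far, i.e. d_k(t). *)
Definition RCsum (S : alg_state R n m) (t : R) (l : nat) : R :=
  \sum_(k | ~~ st_del S k && (arr k <= t) && in_prefix S l (el k)) dly L0 evs k t.

(* element counter EC_e at time t in state S: delay incurred by requests for
   e since the last reset of EC_e. *)
Definition EC (S : alg_state R n m) (t : R) (e : 'I_n) : R :=
  \sum_(k | el k == e)
     (dly L0 evs k t - match st_rst S e with Some r => dly L0 evs k r | None => 0 end).

Definition triggered (S : alg_state R n m) (t : R) (ev : alg_event n) : bool :=
  match ev with
  | PrefixEv l => (0 < l <= n)%N && (l%:R <= RCsum S t l)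
  | ElemEv e => (pos S e).+1%:R <= EC S t e
  end.

End Counters.

Definition dflt_ev : R * alg_event n := (0, PrefixEv n 0).

(* [evs] is (the complete list of events of) a run of ALG on the input, from
   the initial list L0:
   - events are ordered by time;
   - each event is performed at a moment when its counter condition holds;
   - at every time t, once all events of times <= t have been performed, no
     counter condition holds any more (events are performed when triggered). *)
Definition alg_run (L0 : seq 'I_n) (evs : seq (R * alg_event n)) : Prop :=
  [/\ sorted (fun x y : R * alg_event n => x.1 <= y.1) evs,
      (forall j, (j < size evs)%N ->
         let x := nth dflt_ev evs j in
         triggered L0 evs (run_state L0 (take j evs)) x.1 x.2) &
      (forall t : R,
         let S := run_state L0 [seq x <- evs | x.1 <= t] in
         (forall l, (0 < l <= n)%N -> RCsum L0 evs S t l < l%:R) /\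
         (forall e, EC L0 evs S t e < (pos S e).+1%:R))].

Definition alg_move_cost (L0 : seq 'I_n) (evs : seq (R * alg_event n)) (t : R) : nat :=
  \sum_(j < size evs | (nth dflt_ev evs j).1 <= t)
     ev_cost (run_state L0 (take j evs)) (nth dflt_ev evs j).2.

Definition alg_cost (L0 : seq 'I_n) (evs : seq (R * alg_event n)) (t : R) : R :=
  (alg_move_cost L0 evs t)%:R + \sum_(k < m) dly L0 evs k t.

End Alg.

(* Main.v *)
Require Import Defs.
From HB Require Import structures.
From mathcomp Require Import all_boot all_order all_algebra.
From mathcomp Require Import reals.
From mathcomp Require Import zify lra.
Import Order.TTheory GRing.Theory Num.Theory.
Local Open Scope ring_scope.

Theorem mainTheorem11 (R : realType) (n m : nat)
    (el : 'I_m -> 'I_n) (arr : 'I_m -> R) (D : 'I_m -> R -> R)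
    (L0 : seq 'I_n) (evs : seq (R * alg_event n)) :
  valid_input arr D ->
  perm_eq L0 (enum 'I_n) ->
  alg_run el arr D L0 evs ->
  forall t : R,
    alg_cost el arr D L0 evs t <= 6 * \sum_(k < m) dly el arr D L0 evs k t.
Proof.
move=> [D0 Dmono _] _ [srt trig _] t.
set d := dly el arr D L0 evs.
have d0 : forall k s, 0 <= d k s by move=> k s; rewrite /d /dly; exact: D0.
have dmono : forall k s1 s2, s1 <= s2 -> d k s1 <= d k s2.
  move=> k s1 s2 le12; rewrite /d /dly; apply: Dmono.
  case: (st_srv _ _) => // s.
  rewrite le_min !ge_min le12 lexx /=; by rewrite !orbT.
set S := fun j => run_state el arr L0 (take j evs).
set x := fun j => nth (dflt_ev R n) evs j.
have Sstep : forall j, (j < size evs)%N -> S j.+1 = step el arr (S j) (x j).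
  move=> j hj; by rewrite /S /run_state (take_nth (dflt_ev R n) hj) foldl_rcons.
set rv := fun (j : nat) (k : 'I_m) =>
  match st_rst (S j) (el k) with Some r => d k r | None => 0 end.
set C := fun j => (\sum_(i < j) ev_cost (S i) (x i).2)%N.
set N := find (fun y : R * alg_event n => ~~ (y.1 <= t)) evs.
have NS : (N <= size evs)%N by exact: find_size.
have xle : forall j, (j < N)%N -> (x j).1 <= t.
  move=> j hj; have := before_find (dflt_ev R n) hj; rewrite /x /=; by move/negPn.
have inv : forall j, (j <= N)%N ->
   ((C j)%:R <= 2 * \sum_(k | st_del (S j) k) d k t + 3 * \sum_k rv j k)
   /\ (forall e r, st_rst (S j) e = Some r -> r <= t).
  elim=> [|j IH] hj.
    split; last by move=> e r; rewrite /S take0.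
    rewrite /C big_ord0 /rv /S take0 /=.
    by apply: addr_ge0; apply: mulr_ge0 => //; apply: sumr_ge0 => k _.
  have hjN : (j < N)%N by [].
  have hjs : (j < size evs)%N by apply: leq_trans hjN NS.
  have [IHc IHr] := IH (ltnW hjN).
  have tj : triggered el arr D L0 evs (S j) (x j).1 (x j).2 := trig j hjs.
  have taut : (x j).1 <= t := xle j hjN.
  have SS := Sstep j hjs.
  have -> : C j.+1 = (C j + ev_cost (S j) (x j).2)%N by rewrite /C big_ord_recr.
  move: tj taut SS; case: (x j) => tau ev /= tj taut SS.
  rewrite natrD.
  case: ev tj SS => [l|e] tj SS.
  -
    move: tj => /andP [_ tj].
    set P := fun k => ~~ st_del (S j) k && (arr k <= tau) && in_prefix (S j) l (el k).
    have hdel : \sum_(k | st_del (S j.+1) k) d k t =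
        \sum_(k | st_del (S j) k) d k t + \sum_(k | P k) d k t.
      rewrite (bigID (fun k => st_del (S j) k)) /=; congr (_ + _).
        apply: eq_bigl => k; rewrite SS /=; by rewrite andb_idl // => ->.
      by apply: eq_bigl => i; rewrite SS /= /P andb_orl andbN /= andbC andbA.
    have hrv : \sum_k rv j.+1 k = \sum_k rv j k.
      by apply: eq_bigr => i _; rewrite /rv SS.
    have hRC : RCsum el arr D L0 evs (S j) tau l <= \sum_(k | P k) d k t.
      by rewrite /RCsum; apply: ler_sum => i _; apply: dmono.
    have hcost : (ev_cost (S j) (PrefixEv n l))%:R <= 2 * (l%:R : R).
      rewrite /= -natrM ler_nat; exact: geq_minl.
    split.
      rewrite hdel hrv mulrDr -addrA [_ * (\sum_(k | P k) _) + _]addrC addrA.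
      apply: lerD => //; apply: le_trans hcost _.
      rewrite ler_pM2l //; exact: le_trans tj hRC.
    by move=> e r; rewrite SS /=; apply: IHr.
  -
    have hdel : \sum_(k | st_del (S j) k) d k t <= \sum_(k | st_del (S j.+1) k) d k t.
      rewrite [X in _ <= X](bigID (fun k => st_del (S j) k)) /=.
      have -> : \sum_(i | st_del (S j.+1) i && st_del (S j) i) d i t =
                \sum_(k | st_del (S j) k) d k t.
        by apply: eq_bigl => i; rewrite SS /=; rewrite andb_idl // => ->.
      rewrite lerDl; apply: sumr_ge0 => i _; exact: d0.
    have hrv : \sum_k rv j.+1 k = \sum_k rv j k + EC el arr D L0 evs (S j) tau e.
      rewrite /EC (big_mkcond (fun k => el k == e)) -big_split /=.
      apply: eq_bigr => i _; rewrite /rv SS /=.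
      case: eqP => [->|_]; last by rewrite addr0.
      by rewrite /d addrC subrK.
    have hcost : (ev_cost (S j) (ElemEv e))%:R <= 3 * ((pos (S j) e).+1%:R : R).
      rewrite /= -natrM ler_nat.
      have := geq_minl (2 * (pos (S j) e).+1) n; lia.
    split.
      rewrite hrv mulrDr addrA.
      apply: lerD; last by apply: le_trans hcost _; rewrite ler_pM2l.
      apply: le_trans IHc _; by rewrite lerD2r ler_pM2l.
    move=> e' r; rewrite SS /=; case: eqP => [_ [<-] //|_]; exact: IHr.
have hC : alg_move_cost el arr L0 evs t = C N.
  rewrite /alg_move_cost -(big_mkord (fun j => ((nth (dflt_ev R n) evs j).1 <= t)%R)
     (fun j => ev_cost (run_state el arr L0 (take j evs)) (nth (dflt_ev R n) evs j).2)).
  rewrite (big_cat_nat (leq0n N) NS) /=.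
  have -> : (\sum_(N <= i < size evs | ((nth (dflt_ev R n) evs i).1 <= t)%R)
     ev_cost (run_state el arr L0 (take i evs)) (nth (dflt_ev R n) evs i).2 = 0)%N.
    rewrite big_nat_cond big1 // => i /andP [/andP [hNi his] hit].
    have hN : (N < size evs)%N by apply: leq_ltn_trans hNi his.
    have hh : has (fun y : R * alg_event n => ~~ (y.1 <= t)) evs by rewrite has_find.
    have := nth_find (dflt_ev R n) hh; rewrite -/N /= => hNt.
    have le := @sorted_leq_nth _ (fun x y : R * alg_event n => x.1 <= y.1)
      (fun a b c h1 h2 => le_trans h1 h2) (fun a => lexx a.1) (dflt_ev R n) evs srt N i hN his hNi.
    by move: hNt; rewrite /= (le_trans le hit).
  rewrite addn0 /C -(big_mkord xpredT (fun i => ev_cost (S i) (x i).2)) big_nat_cond [RHS]big_nat_cond.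
  apply: eq_bigl => i; rewrite andbT; apply/idP/idP => [/andP[] //|h]; rewrite h xle //; by case/andP: h.
have [hfin hr] := inv N (leqnn N).
rewrite /alg_cost hC.
have h1 : \sum_(k | st_del (S N) k) d k t <= \sum_k d k t.
  rewrite [X in _ <= X](bigID (fun k => st_del (S N) k)) /= lerDl.
  by apply: sumr_ge0 => i _.
have h2 : \sum_k rv N k <= \sum_k d k t.
  apply: ler_sum => i _; rewrite /rv; case E: (st_rst _ _) => [r|]; last exact: d0.
  apply: dmono; exact: hr E.
lra.
Qed.
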